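(* Let $G$ be a countable even-by-quotient abelian group with $\dim_{\mathbb Q}(G\otimes\mathbb Q)<\infty$, and let $H$ be the subgroup generated by a maximal independent system of elements of infinite order of $G$. Then the exact sequence \[0\to H\overset{i}{\to}G\overset{\pi}{\to}G/H\to0\] is coarsely split.
   Context: A set of nonzero elements $\{x_j\}$ of an abelian group is independent if $\sum n_jx_j=0$ implies $n_jx_j=0$ for all $j$. A countable abelian group $G$ is even-by-quotient if, for $H$ the subgroup generated by a maximal independent system of elements of infinite order, every element of $G/H$ has order a power of $2$. A proper left invariant metric on a countable group is $d(g,h)=\|g^{-1}h\|$ for a proper norm ($\|g\|=0$ iff $g=1$, $\|g\|=\|g^{-1}\|$, subadditive, finite balls). An exact sequence $0\to K\overset{i}{\to}G\overset{\pi}{\to}Q\to0$ is coarsely split if there are proper left invariant metrics $d_K,d_G,d_Q$ and a coarse equivalence $f:(G,d_G)\to(K\oplus Q,d_K\oplus d_Q)$ ($\ell_1$ sum metric) such that $f\circ i$ is at bounded distance from $k\mapsto(k,0)$ and $\pi'\circ f$ is at bounded distance from $\pi$, $\pi'$ the projection onto $Q$. Coarse maps: for each $\delta$ there is $\epsilon$ with $d(x,y)\le\delta\Rightarrow d(f(x),f(y))\le\epsilon$; coarse equivalences: coarse maps with coarse inverses up to bounded distance. *)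

(* Defs.v *)
From HB Require Import structures.
From mathcomp Require Import all_boot all_order all_algebra.
From Stdlib Require Import Rdefinitions.
From mathcomp Require Import Rstruct.
Set Implicit Arguments. Unset Strict Implicit. Unset Printing Implicit Defensive.
Import GRing.Theory.

Local Open Scope ring_scope.

Definition inf_order (G : zmodType) (x : G) : Prop :=
  forall n : nat, is_true (0 < n)%nat -> x *+ n != 0.

Definition independent (G : zmodType) (S : G -> Prop) : Prop :=
  (forall x, S x -> x != 0) /\
  forall l : seq (int * G),
    uniq (map snd l) -> (forall p, p \in l -> S p.2) ->
    \sum_(p <- l) p.2 *~ p.1 = 0 -> forall p, p \in l -> p.2 *~ p.1 = 0.

Definition max_indep_inf (G : zmodType) (S : G -> Prop) : Prop :=
  [/\ independent S, (forall x, S x -> inf_order x) &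
      forall T : G -> Prop, (forall x, S x -> T x) -> independent T ->
        (forall x, T x -> inf_order x) -> forall x, T x -> S x].

Definition gen_subgroup (G : zmodType) (S : G -> Prop) (g : G) : Prop :=
  exists l : seq (int * G), (forall p, p \in l -> S p.2) /\
    g = \sum_(p <- l) p.2 *~ p.1.

(* Torsion-free rank (= dim_Q (G ⊗ Q)) is finite: independent systems of
   elements of infinite order have bounded size. *)
Definition finite_rank (G : zmodType) : Prop :=
  exists n : nat, forall l : seq G, uniq l ->
    independent (fun x => x \in l) -> (forall x, x \in l -> inf_order x) ->
    is_true (size l <= n)%nat.

Definition proper_norm (G : zmodType) (N : G -> R) : Prop :=
  (forall g, N g = 0 <-> g = 0) /\
  (forall g, N (- g) = N g) /\
  (forall g h, N (g + h) <= N g + N h) /\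
  (forall r : R, exists s : seq G, forall g, N g <= r -> g \in s).

Definition norm_dist (G : zmodType) (N : G -> R) (g h : G) : R := N (- g + h).

Definition sum_dist (A B : Type) (dA : A -> A -> R) (dB : B -> B -> R)
  (x y : A * B) : R := dA x.1 y.1 + dB x.2 y.2.

Definition coarse_map (X Y : Type) (dX : X -> X -> R) (dY : Y -> Y -> R)
  (f : X -> Y) : Prop :=
  forall delta : R, exists eps : R, forall x y, dX x y <= delta -> dY (f x) (f y) <= eps.

Definition bounded_distance (A Y : Type) (dY : Y -> Y -> R) (u v : A -> Y) : Prop :=
  exists C : R, forall a, dY (u a) (v a) <= C.

Definition coarse_equiv (X Y : Type) (dX : X -> X -> R) (dY : Y -> Y -> R)
  (f : X -> Y) : Prop :=
  coarse_map dX dY f /\ exists g : Y -> X, coarse_map dY dX g /\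
    bounded_distance dX (fun x => g (f x)) id /\
    bounded_distance dY (fun y => f (g y)) id.

Definition coarsely_split (K G Q : zmodType) (i : K -> G) (pi : G -> Q) : Prop :=
  exists (NK : K -> R) (NG : G -> R) (NQ : Q -> R),
    proper_norm NK /\ proper_norm NG /\ proper_norm NQ /\
    exists f : G -> K * Q,
      coarse_equiv (norm_dist NG) (sum_dist (norm_dist NK) (norm_dist NQ)) f /\
      bounded_distance (sum_dist (norm_dist NK) (norm_dist NQ))
        (fun k => f (i k)) (fun k => (k, 0)) /\
      bounded_distance (norm_dist NQ) (fun g => (f g).2) pi.

(* Main.v *)
Require Import Defs.
From HB Require Import structures.
From mathcomp Require Import all_boot all_order all_algebra.
From mathcomp Require Import zify ring lra.
From Stdlib Require Import ClassicalEpsilon.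
Import GRing.Theory Num.Theory Order.TTheory.
Local Open Scope ring_scope.
Set Implicit Arguments. Unset Strict Implicit.

Lemma floor_bounds (a d : int) : 0 < d ->
  (a %/ d)%Z * d <= a /\ a < (a %/ d)%Z * d + d.
Proof.
move=> d0; have dn0 : d != 0 by lia.
have h1 := modz_ge0 a dn0; have h2 := ltz_mod a dn0.
have e := divz_eq a d.
have ad : `|d| = d by apply/gtr0_norm.
rewrite ad in h2; lia.
Qed.

Lemma floor_unique (a d q : int) : 0 < d -> q * d <= a -> a < q * d + d ->
  (a %/ d)%Z = q.
Proof.
move=> d0 h1 h2; have dn0 : d != 0 by lia.
have -> : a = q * d + (a - q * d) by lia.
rewrite divzMDl // divz_small ?addr0 //.
apply/andP; split; first lia.
have -> : (`|d|%nat : int) = `|d| by [].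
rewrite gtr0_norm //; lia.
Qed.

Lemma floor_scale (a a' d d' : int) : 0 < d -> 0 < d' -> a * d' = a' * d ->
  (a %/ d)%Z = (a' %/ d')%Z.
Proof.
move=> d0 d0' e.
have [h1 h2] := floor_bounds a' d0'.
apply: floor_unique => //; set q := (a' %/ d')%Z in h1 h2 *; nia.
Qed.

Lemma floor_shift (a w d : int) : 0 < d -> ((a + w * d) %/ d)%Z = (a %/ d)%Z + w.
Proof.
move=> d0; have [h1 h2] := floor_bounds a d0.
apply: floor_unique => //; set q := (a %/ d)%Z in h1 h2 *; nia.
Qed.

Lemma floor_add (a b d : int) : 0 < d ->
  ((a + b) %/ d)%Z - (a %/ d)%Z - (b %/ d)%Z = 0 \/
  ((a + b) %/ d)%Z - (a %/ d)%Z - (b %/ d)%Z = 1.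
Proof.
move=> d0; have [h1 h2] := floor_bounds a d0.
have [h3 h4] := floor_bounds b d0.
have [h5 h6] := floor_bounds (a + b) d0.
set qa := (a %/ d)%Z in h1 h2 *; set qb := (b %/ d)%Z in h3 h4 *.
set r := ((a + b) %/ d)%Z in h5 h6 *.
have t1 : (r - qa - qb) * d > - d by nia.
have t2 : (r - qa - qb) * d < 2 * d by nia.
have t3 : r - qa - qb > -1 by nia.
have t4 : r - qa - qb < 2 by nia.
lia.
Qed.

Section Lin.
Variables (G : zmodType) (S : G -> Prop) (xs : seq G).
Hypothesis indS : independent S.
Hypothesis infS : forall x, S x -> inf_order x.
Hypothesis xsS : forall x, x \in xs -> S x.
Hypothesis Sxs : forall x, S x -> x \in xs.
Hypothesis xs_uniq : uniq xs.

Definition lin (v : 'I_(size xs) -> int) : G := \sum_(j < size xs) xs`_j *~ v j.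

Lemma lin_ext v w : (forall j, v j = w j) -> lin v = lin w.
Proof. by move=> h; apply: eq_bigr => j _; rewrite h. Qed.

Lemma linD v w : lin (fun j => v j + w j) = lin v + lin w.
Proof. by rewrite /lin -big_split; apply: eq_bigr => j _; rewrite mulrzDr. Qed.

Lemma linN v : lin (fun j => - v j) = - lin v.
Proof. by rewrite /lin -sumrN; apply: eq_bigr => j _; rewrite mulrNz. Qed.

Lemma linB v w : lin (fun j => v j - w j) = lin v - lin w.
Proof. by rewrite linD linN. Qed.

Lemma lin0 : lin (fun _ => 0) = 0.
Proof. by rewrite /lin big1 // => j _; rewrite mulr0z. Qed.

Lemma linM v (m : nat) : lin (fun j => v j * m%:Z) = lin v *+ m.
Proof.
by rewrite /lin -sumrMnl; apply: eq_bigr => j _; rewrite mulrzA -pmulrn.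
Qed.

Lemma inf_order_z (x : G) (m : int) : inf_order x -> x *~ m = 0 -> m = 0.
Proof.
move=> hx; case: m => [[|m]|m] //.
  move=> h; have := hx m.+1 isT.
  by rewrite pmulrn h eqxx.
rewrite NegzE mulrNz => /eqP; rewrite oppr_eq0 => /eqP h.
by have := hx m.+1 isT; rewrite pmulrn h eqxx.
Qed.

Lemma lin_inj0 v : lin v = 0 -> forall j, v j = 0.
Proof.
move=> h j.
pose l := [seq (v k, xs`_k) | k <- enum 'I_(size xs)].
have ml : map snd l = xs.
  rewrite /l -map_comp.
  have -> : [seq (snd \o (fun k : 'I_(size xs) => (v k, xs`_k))) i | i <- enum 'I_(size xs)]
    = [seq nth 0 xs i | i <- [seq val k | k <- enum 'I_(size xs)]] by rewrite -map_comp.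
  by rewrite val_enum_ord map_nth_iota0 // take_size.
have hl : forall p, p \in l -> S p.2.
  by move=> p /mapP [k _ ->] /=; apply: xsS; apply: mem_nth.
have hs : \sum_(p <- l) p.2 *~ p.1 = 0.
  by rewrite big_map big_enum /=; exact: h.
have hu : uniq (map snd l) by rewrite ml.
have hm : (v j, xs`_j) \in l by apply/mapP; exists j => //; rewrite mem_enum.
have /= h2 := indS.2 l hu hl hs (v j, xs`_j) hm. apply: inf_order_z h2; apply: infS; apply: xsS; exact: mem_nth.
Qed.

Lemma lin_inj v w : lin v = lin w -> forall j, v j = w j.
Proof.
move=> h j; apply/eqP; rewrite -subr_eq0; apply/eqP; move: j; apply: lin_inj0.
by rewrite linB h subrr.
Qed.

Definition delta (j0 : 'I_(size xs)) (a : int) : 'I_(size xs) -> int :=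
  fun j => if j == j0 then a else 0.

Lemma lin_delta j0 a : lin (delta j0 a) = xs`_j0 *~ a.
Proof.
rewrite /lin (bigD1 j0) //= /delta eqxx big1 ?addr0 // => j /negPf ->.
by rewrite mulr0z.
Qed.

Lemma lin_gen h : gen_subgroup S h -> exists v, h = lin v.
Proof.
move=> [l [hl ->]]; elim: l hl => [|p l IH] hl.
  by exists (fun _ => 0); rewrite big_nil lin0.
have [|w hw] := IH; first by move=> q hq; apply: hl; rewrite in_cons hq orbT.
have hp : p.2 \in xs by apply: Sxs; apply: hl; rewrite in_cons eqxx.
have hi : (index p.2 xs < size xs)%nat by rewrite index_mem.
pose j0 : 'I_(size xs) := Ordinal hi.
exists (fun j => w j + delta j0 p.1 j).
rewrite linD lin_delta big_cons hw addrC; congr (_ + _).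
by rewrite /= nth_index.
Qed.

Lemma gen_lin v : gen_subgroup S (lin v).
Proof.
exists [seq (v k, xs`_k) | k <- enum 'I_(size xs)]; split.
  by move=> p /mapP [k _ ->] /=; apply: xsS; apply: mem_nth.
by rewrite big_map big_enum.
Qed.


Hypothesis even : forall g : G, exists k : nat, gen_subgroup S (g *+ (Nat.pow 2 k)).

Lemma pow_expn k : Nat.pow 2 k = (expn 2 (k)).
Proof. elim: k => //= k IH; by rewrite expnS IH. Qed.

Lemma rep g : exists kv : nat * ('I_(size xs) -> int), g *+ (expn 2 (kv.1)) = lin kv.2.
Proof. have [k hk] := even g; rewrite pow_expn in hk; have [v hv] := lin_gen hk; by exists (k, v). Qed.

Definition pw (k : nat) : int := ((expn 2 (k)))%:Z.
Lemma pw_gt0 k : 0 < pw k.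
Proof. by rewrite /pw ltz_nat expn_gt0. Qed.

Definition E g : 'I_(size xs) -> int :=
  let kv := proj1_sig (constructive_indefinite_description _ (rep g)) in
  fun j => (kv.2 j %/ pw kv.1)%Z.

Lemma E_spec g k v : g *+ (expn 2 (k)) = lin v -> forall j, E g j = (v j %/ pw k)%Z.
Proof.
move=> h j; rewrite /E; case: constructive_indefinite_description => [[k' v'] /= h'].
apply: floor_scale; try exact: pw_gt0.
have : lin (fun j => v' j * pw k) = lin (fun j => v j * pw k').
  by rewrite !linM -h -h' -!mulrnA mulnC.
by move/lin_inj; apply.
Qed.

Lemma E_shift g w j : E (g + lin w) j = E g j + w j.
Proof.
have [[k v] /= h] := rep g.
rewrite (E_spec h) (@E_spec _ k (fun j => v j + w j * pw k)).
  by rewrite floor_shift // pw_gt0.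
by rewrite mulrnDl h linD linM.
Qed.

Lemma E0 j : E 0 j = 0.
Proof.
rewrite (@E_spec 0 0 (fun _ => 0)) ?div0z //.
by rewrite mul0rn lin0.
Qed.

Lemma E_lin w j : E (lin w) j = w j.
Proof. by have := E_shift 0 w j; rewrite add0r E0 add0r. Qed.

Definition sigma g := g - lin (E g).

Lemma sigma_shift g w : sigma (g + lin w) = sigma g.
Proof.
rewrite /sigma (lin_ext (E_shift g w)) linD.
by rewrite opprD addrACA subrr addr0.
Qed.

Lemma E_sigma g j : E (sigma g) j = 0.
Proof.
have -> : sigma g = g + lin (fun j => - E g j) by rewrite linN.
by rewrite E_shift subrr.
Qed.

Definition cocy g y j := E (g + y) j - E g j - E y j.

Lemma cocy01 g y j : cocy g y j = 0 \/ cocy g y j = 1.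
Proof.
have [[k1 v] /= h1] := rep g; have [[k2 w] /= h2] := rep y.
have e1 : g *+ (2 ^ (k1 + k2))%nat = lin (fun j => v j * pw k2).
  by rewrite linM -h1 -mulrnA expnD.
have e2 : y *+ (2 ^ (k1 + k2))%nat = lin (fun j => w j * pw k1).
  by rewrite linM -h2 -mulrnA expnD mulnC.
have e3 : (g + y) *+ (2 ^ (k1 + k2))%nat = lin (fun j => v j * pw k2 + w j * pw k1).
  by rewrite mulrnDl e1 e2 linD.
rewrite /cocy (E_spec e1) (E_spec e2) (E_spec e3); apply: floor_add.
exact: pw_gt0.
Qed.

Lemma E_add g y j : E (g + y) j = E g j + E y j + cocy g y j.
Proof. rewrite /cocy; lia. Qed.

Lemma zz (g y A a b : G) : g + y - A = g - a + (y - b) - (A - a - b).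
Proof.
rewrite !opprB -[in RHS]addrA (addrA (y - b)) subrK.
rewrite addrCA -[g - a + _]addrA addKr.
by rewrite addrA [y + g]addrC.
Qed.

Lemma sigma_cocycle g y : sigma (g + y) = sigma g + sigma y - lin (cocy g y).
Proof.
have hc : lin (cocy g y) = lin (E (g + y)) - lin (E g) - lin (E y).
  by rewrite /cocy !linB.
rewrite /sigma hc; exact: zz.
Qed.

End Lin.

From Stdlib Require Import Rdefinitions.
From mathcomp Require Import Rstruct.
Import GRing.Theory Num.Theory Order.TTheory.

Section Norm.
Variables (A : zmodType) (c : A -> nat).
Hypothesis c_inj : injective c.

Definition wt (x : A) : nat := (c x + c (- x)).+1.
Definition reach (a : A) (m : nat) : Prop :=
  exists l : seq A, (\sum_(x <- l) wt x)%nat = m /\ \sum_(x <- l) x = a.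
Definition reachb a m : bool :=
  if excluded_middle_informative (reach a m) then true else false.
Lemma reachbP a m : reachb a m <-> reach a m.
Proof. by rewrite /reachb; case: excluded_middle_informative. Qed.
Lemma ex_reach a : exists m, reachb a m.
Proof. exists (wt a); apply/reachbP; exists [:: a]; by rewrite !big_seq1. Qed.
Definition nrm a := ex_minn (ex_reach a).
Lemma nrm_reach a : reach a (nrm a).
Proof. by rewrite /nrm; case: ex_minnP => m /reachbP. Qed.
Lemma nrm_min a m : reach a m -> (nrm a <= m)%nat.
Proof. rewrite /nrm; case: ex_minnP => k _ H /reachbP; apply: H. Qed.
Definition Nrm a : R := (nrm a)%:R.

Lemma Nrm0 a : Nrm a = 0 <-> a = 0.
Proof.
split.
  move/eqP; rewrite pnatr_eq0 => /eqP H.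
  have [l [Hw Hs]] := nrm_reach a; rewrite H in Hw.
  case: l Hw Hs => [|x l]; first by move=> _; rewrite big_nil.
  by rewrite big_cons /wt addSn.
move->; apply/eqP; rewrite pnatr_eq0 -leqn0; apply: nrm_min.
by exists [::]; rewrite !big_nil.
Qed.

Lemma reachN a m : reach a m -> reach (- a) m.
Proof.
move=> [l [Hw Hs]]; exists (map -%R l); rewrite !big_map; split.
  by rewrite -Hw; apply: eq_bigr => x _; rewrite /wt opprK addnC.
by rewrite sumrN Hs.
Qed.

Lemma NrmN a : Nrm (- a) = Nrm a.
Proof.
rewrite /Nrm; congr (_%:R); apply/eqP; rewrite eqn_leq.
have h1 : (nrm (-a) <= nrm a)%nat := nrm_min (reachN (nrm_reach a)).
have h2 : (nrm a <= nrm (-a))%nat.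
  by rewrite -{1}[a]opprK; exact: nrm_min (reachN (nrm_reach (-a))).
by rewrite h1 h2.
Qed.

Lemma reachD a b m k : reach a m -> reach b k -> reach (a + b) (m + k).
Proof.
move=> [l1 [H1 S1]] [l2 [H2 S2]]; exists (l1 ++ l2).
by rewrite !big_cat /= H1 H2 S1 S2.
Qed.

Lemma NrmD a b : Nrm (a + b) <= Nrm a + Nrm b.
Proof.
rewrite /Nrm -natrD ler_nat; apply: nrm_min; apply: reachD; exact: nrm_reach.
Qed.

Definition dec (m : nat) : option A :=
  match excluded_middle_informative (exists a, c a = m) with
  | left H => Some (proj1_sig (constructive_indefinite_description _ H))
  | right _ => None end.

Lemma dec_c a : dec (c a) = Some a.
Proof.
rewrite /dec; case: excluded_middle_informative => [H|H]; last first.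
  by exfalso; apply: H; exists a.
by case: constructive_indefinite_description => x /= Hx; rewrite (c_inj Hx).
Qed.

Definition Ys r := pmap dec (iota 0 r).
Lemma mem_Ys a r : (c a < r)%nat -> a \in Ys r.
Proof.
move=> H; rewrite mem_pmap; apply/mapP; exists (c a); last by rewrite dec_c.
by rewrite mem_iota.
Qed.

Fixpoint sums (Y : seq A) (m : nat) : seq A :=
  match m with 0 => [:: 0] | m'.+1 =>
    sums Y m' ++ [seq y + z | y <- Y, z <- sums Y m'] end.

Lemma sums_mem Y m l : (size l <= m)%nat -> all (mem Y) l ->
  \sum_(x <- l) x \in sums Y m.
Proof.
elim: m l => [|m IH] [|x l] //=.
- by rewrite big_nil inE.
- by move=> _ _; rewrite mem_cat IH.
- move=> Hs /andP [Hx Hl]; rewrite mem_cat; apply/orP; right.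
  rewrite big_cons; apply/allpairsP; exists (x, \sum_(y <- l) y) => /=.
  by split => //; apply: IH.
Qed.

Lemma size_wt l : (size l <= \sum_(x <- l) wt x)%nat.
Proof. elim: l => [|x l IH]; first by rewrite big_nil. rewrite big_cons /=; have : (0 < wt x)%nat by []. lia. Qed.

Lemma mem_wt l x : x \in l -> (wt x <= \sum_(y <- l) wt y)%nat.
Proof.
elim: l => [|y l IH] //; rewrite in_cons big_cons => /orP [/eqP->|H].
  by apply: leq_addr.
by apply: leq_trans (IH H) _; apply: leq_addl.
Qed.

Lemma Nrm_proper (r : R) : exists s : seq A, forall a, Nrm a <= r -> a \in s.
Proof.
set M := Num.bound `|r|.
have HM : r <= M%:R.
  apply: le_trans (ler_norm r) _; apply: ltW; exact: archi_boundP.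
exists (sums (Ys M.+1) M) => a Ha.
have HaM : (nrm a <= M)%nat by rewrite -(ler_nat R); apply: le_trans Ha HM.
have [l [Hw Hs]] := nrm_reach a; rewrite -Hs; apply: sums_mem.
  by apply: leq_trans (size_wt l) _; rewrite Hw.
apply/allP => x Hx; apply: mem_Ys.
have := mem_wt Hx; rewrite Hw /wt => H; lia.
Qed.

Lemma Nrm_is_proper : proper_norm Nrm.
Proof.
split; first exact: Nrm0.
split; first exact: NrmN.
split; first exact: NrmD.
exact: Nrm_proper.
Qed.
End Norm.

Lemma exists_proper (A : zmodType) (c : A -> nat) :
  injective c -> exists N : A -> R, proper_norm N.
Proof. move=> H; exists (Nrm c); exact: Nrm_is_proper. Qed.

Section NormLemmas.
Variables (A : zmodType) (N : A -> R).
Hypothesis hN : proper_norm N.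

Lemma pn0 : N 0 = 0.
Proof. by apply/hN.1. Qed.
Lemma pnN x : N (- x) = N x.
Proof. exact: hN.2.1. Qed.
Lemma pnD x y : N (x + y) <= N x + N y.
Proof. exact: hN.2.2.1. Qed.
Lemma pn_ge0 x : 0 <= N x.
Proof.
have := pnD x (- x); rewrite subrr pn0 pnN => h.
have : 0 <= N x + N x by []. lra.
Qed.
Lemma pn_ball r : exists s : seq A, forall g, N g <= r -> g \in s.
Proof. exact: hN.2.2.2. Qed.

Lemma pn_sum m (F : 'I_m -> A) : N (\sum_(j < m) F j) <= \sum_(j < m) N (F j).
Proof.
apply: (big_rec2 (fun a b => N a <= b)); first by rewrite pn0.
move=> j a b _ h; apply: le_trans (pnD _ _) _; exact: lerD.
Qed.

Lemma pn_mulz01 x (e : int) : e = 0 \/ e = 1 -> N (x *~ e) <= N x.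
Proof. by case=> ->; rewrite ?mulr0z ?pn0 ?pn_ge0 ?mulr1z. Qed.

Lemma pn_lin01 m (a : 'I_m -> A) (e : 'I_m -> int) :
  (forall j, e j = 0 \/ e j = 1) ->
  N (\sum_(j < m) a j *~ e j) <= \sum_(j < m) N (a j).
Proof.
move=> he; apply: le_trans (pn_sum _) _; apply: ler_sum => j _; exact: pn_mulz01.
Qed.
End NormLemmas.

Lemma sum_bound (T : eqType) (s : seq T) (F : T -> R) x :
  (forall y, 0 <= F y) -> x \in s -> F x <= \sum_(y <- s) F y.
Proof.
move=> h0; elim: s => [|y s IH] //; rewrite in_cons big_cons => /orP [/eqP->|h].
  by rewrite lerDl sumr_ge0.
by apply: le_trans (IH h) _; rewrite lerDr.
Qed.

Lemma S_enum (G : zmodType) (S : G -> Prop) :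
  finite_rank G -> independent S -> (forall x, S x -> inf_order x) ->
  exists xs : seq G, [/\ uniq xs, (forall x, x \in xs -> S x) & (forall x, S x -> x \in xs)].
Proof.
move=> [n0 hn0] indS infS.
pose P m := exists l : seq G, [/\ uniq l, size l = m & forall x, x \in l -> S x].
pose Pb m : bool := if excluded_middle_informative (P m) then true else false.
have PbP m : Pb m <-> P m by rewrite /Pb; case: excluded_middle_informative.
have ex : exists m, Pb m by exists 0%nat; apply/PbP; exists [::].
have bnd : forall m, Pb m -> (m <= n0)%nat.
  move=> m /PbP [l [ul <- hl]]; apply: hn0 => //.
    split; first by move=> x /hl /(indS.1).
    move=> l' u' h' hs; apply: indS.2 => // p /h' /hl //.
  by move=> x /hl /infS.
case: (ex_maxnP ex bnd) => m /PbP [l [ul sl hl]] hmax.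
exists l; split => // x Sx; case: (boolP (x \in l)) => // hx.
have : Pb m.+1.
  apply/PbP; exists (x :: l); split => //=; first by rewrite hx.
    by rewrite sl.
  by move=> y; rewrite in_cons => /orP [/eqP->|/hl].
by move/hmax; rewrite ltnn.
Qed.

Lemma sum_distE (A B : Type) (dA : A -> A -> R) (dB : B -> B -> R) (x y : A * B) :
  sum_dist dA dB x y = dA x.1 y.1 + dB x.2 y.2 :> R.
Proof. by []. Qed.

Lemma zz2 (G : zmodType) (a b a' c e : G) : - (a + b) + (a' + (b + c - e)) = (- a + a') + c - e.
Proof.
rewrite opprD -!addrA; congr (_ + _).
by rewrite (addrCA (- b)) addKr.
Qed.

Unset Implicit Arguments. Set Strict Implicit.
Theorem mainTheorem5 (G : countZmodType) (S : G -> Prop)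
  (K Q : zmodType) (i : {additive K -> G}) (pi : {additive G -> Q}) :
  finite_rank G ->
  max_indep_inf S ->
  (* even-by-quotient: every element of G/H has order a power of 2 *)
  (forall g : G, exists k : nat, gen_subgroup S (g *+ (2 ^ k)%nat)) ->
  (* i identifies K with H = <S> *)
  injective i ->
  (forall g : G, gen_subgroup S g <-> exists k : K, g = i k) ->
  (* pi : G -> Q is the quotient map G -> G/H *)
  (forall q : Q, exists g : G, pi g = q) ->
  (forall g : G, pi g = 0 <-> gen_subgroup S g) ->
  coarsely_split i pi.
Proof.
move=> frk [indS infS _] even iinj iH pisurj piker.
have [xs [xs_uniq xsS Sxs]] := S_enum frk indS infS.
set n := size xs.
pose pre (q : Q) : G := proj1_sig (constructive_indefinite_description _ (pisurj q)).
have preP q : pi (pre q) = q.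
  by rewrite /pre; case: constructive_indefinite_description.
have [NG hNG] := exists_proper (pcan_inj (@pickleK G)).
have [NK hNK] : exists N : K -> R, proper_norm N.
  apply: (@exists_proper _ (fun k => pickle (i k))) => a b /(pcan_inj pickleK); exact: iinj.
have [NQ hNQ] : exists N : Q -> R, proper_norm N.
  apply: (@exists_proper _ (fun q => pickle (pre q))) => a b /(pcan_inj pickleK) h.
  by rewrite -(preP a) -(preP b) h.
have hx : forall j : 'I_n, exists k : K, xs`_j = i k.
  move=> j; apply/iH; exists [:: (1, xs`_j)]; split.
    by move=> p; rewrite inE => /eqP -> /=; apply: xsS; apply: mem_nth.
  by rewrite big_seq1 mulr1z.
pose kx (j : 'I_n) : K := proj1_sig (constructive_indefinite_description _ (hx j)).
have kxP j : i (kx j) = xs`_j.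
  by rewrite /kx; case: constructive_indefinite_description.
pose linK (v : 'I_n -> int) : K := \sum_(j < n) kx j *~ v j.
have i_linK v : i (linK v) = lin v.
  rewrite /linK raddf_sum; apply: eq_bigr => j _; by rewrite raddfMz kxP.
have linK_ext v w : (forall j, v j = w j) -> linK v = linK w.
  by move=> h; apply: eq_bigr => j _; rewrite h.
have linKD v w : linK (fun j => v j + w j) = linK v + linK w.
  by rewrite /linK -big_split; apply: eq_bigr => j _; rewrite mulrzDr.
pose EE := E Sxs even.
pose sg := sigma Sxs even.
pose cc := cocy Sxs even.
have Eshift := E_shift indS infS xsS Sxs xs_uniq even.
have Elin := E_lin indS infS xsS Sxs xs_uniq even.
have Esig := E_sigma indS infS xsS Sxs xs_uniq even.
have sgshift := sigma_shift indS infS xsS Sxs xs_uniq even.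
have Eadd := E_add Sxs xs_uniq even.
have sgco := sigma_cocycle Sxs even.
have cc01 := cocy01 indS infS xsS Sxs xs_uniq even.
have pilin (v : 'I_n -> int) : pi (lin (xs:=xs) v) = 0.
  apply/piker; exact: (gen_lin xsS).
have pik k : pi (i k) = 0 by apply/piker; apply/iH; exists k.
have ker_lin g : pi g = 0 -> exists v, g = lin (xs:=xs) v.
  move/piker => h; have := lin_gen Sxs h; done.
have ik_lin k : exists v, i k = lin (xs:=xs) v by apply: ker_lin.
have linK_of k v : i k = lin (xs:=xs) v -> linK v = k.
  by move=> h; apply: iinj; rewrite i_linK h.
pose f (g : G) : K * Q := (linK (EE g), pi g).
pose F (kq : K * Q) : G := i kq.1 + sg (pre kq.2).
have FfK g : F (f g) = g.
  rewrite /F /f /= i_linK.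
  have [w hw] : exists w, pre (pi g) - g = lin (xs:=xs) w.
    by apply: ker_lin; rewrite raddfB preP subrr.
  have -> : pre (pi g) = g + lin w by rewrite -hw addrC subrK.
  rewrite /sg sgshift /sigma; by rewrite addrC subrK.
have fFK kq : f (F kq) = kq.
  case: kq => k q; rewrite /f /F /=.
  have [w hw] := ik_lin k.
  rewrite hw addrC; congr (_, _).
    rewrite -(linK_of k w hw); apply: linK_ext => j.
    by rewrite /EE Eshift Esig add0r.
  by rewrite raddfD pilin addr0 /sg /sigma raddfB pilin subr0 preP.
have fi k : f (i k) = (k, 0).
  rewrite /f pik; have [w hw] := ik_lin k; congr (_, _).
  rewrite hw -(linK_of k w hw); apply: linK_ext => j.
  by rewrite /EE Elin.
exists NK, NG, NQ; split => //; split => //; split => //.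
exists f; split; last split.
- split.
    move=> delta; have [s hs] := pn_ball hNG delta.
    exists (\sum_(x <- s) (NK (linK (EE x)) + NQ (pi x)) + \sum_(j < n) NK (kx j)).
    move=> g h hgh; set x := - g + h; have hxs : x \in s by exact: hs.
    have eh : h = g + x by rewrite /x addrA subrr add0r.
    rewrite sum_distE /norm_dist /f /= eh.
    have e1 : - linK (EE g) + linK (EE (g + x)) = linK (EE x) + linK (cc g x).
      rewrite (linK_ext (EE (g + x)) (fun j => EE g j + (EE x j + cc g x j))).
        by rewrite linKD addKr linKD.
      by move=> j; rewrite /EE /cc /cocy; ring.
    have e2 : - pi g + pi (g + x) = pi x by rewrite raddfD addKr.
    rewrite e1 e2.
    have b1 : NK (linK (cc g x)) <= \sum_(j < n) NK (kx j).
      exact: (pn_lin01 hNK kx (cc01 g x)).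
    have b2 := pnD hNK (linK (EE x)) (linK (cc g x)).
    have b3 := @sum_bound _ s (fun y => NK (linK (EE y)) + NQ (pi y)) x
      (fun y => addr_ge0 (pn_ge0 hNK _) (pn_ge0 hNQ _)) hxs.
    simpl in b3; lra.
  exists F; split; [|split].
  + move=> delta; have [sK hsK] := pn_ball hNK delta; have [sQ hsQ] := pn_ball hNQ delta.
    exists (\sum_(a <- sK) NG (i a) + \sum_(d <- sQ) NG (sg (pre d)) + \sum_(j < n) NG (xs`_j)).
    move=> [k q] [k' q']; rewrite sum_distE /norm_dist /= => hd.
    have hk : - k + k' \in sK.
      by apply: hsK; have := pn_ge0 hNQ (- q + q'); lra.
    have hq : - q + q' \in sQ.
      by apply: hsQ; have := pn_ge0 hNK (- k + k'); lra.
    rewrite /F /=; set y := pre (- q + q').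
    have [w hw] : exists w, pre q' - (pre q + y) = lin (xs:=xs) w.
      by apply: ker_lin; rewrite raddfB raddfD /y !preP addrA subrr add0r subrr.
    have e3 : pre q' = pre q + y + lin w by rewrite -hw addrC subrK.
    rewrite e3 /sg sgshift sgco zz2 -raddfN -raddfD.
    have b1 : NG (lin (cc (pre q) y)) <= \sum_(j < n) NG (xs`_j).
      exact: (pn_lin01 hNG (fun j : 'I_n => xs`_j) (cc01 (pre q) y)).
    have b2 := pnD hNG (i (- k + k') + sigma Sxs even y) (- lin (cc (pre q) y)).
    have b3 := pnD hNG (i (- k + k')) (sigma Sxs even y).
    have b4 := pnN hNG (lin (cc (pre q) y)).
    have b5 := @sum_bound _ sK (fun a => NG (i a)) _ (fun a => pn_ge0 hNG _) hk.
    have b6 := @sum_bound _ sQ (fun d => NG (sg (pre d))) _ (fun a => pn_ge0 hNG _) hq.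
    simpl in b5, b6; rewrite /sg /y in b6 *; lra.
  + by exists 0 => g; rewrite /norm_dist FfK addNr (pn0 hNG).
  + by exists 0 => kq; rewrite sum_distE fFK /norm_dist !addNr (pn0 hNK) (pn0 hNQ) addr0.
- by exists 0 => k; rewrite sum_distE fi /norm_dist /= !addNr (pn0 hNK) (pn0 hNQ) addr0.
- by exists 0 => g; rewrite /norm_dist /f /= addNr (pn0 hNQ).
Qed.
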